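(* Let $R$ be a discrete valuation ring of characteristic $p>0$ with field of fractions $K$. Let $H$ be a primitively generated $K$-Hopf algebra of rank $p^n$, let $t_1,\dots,t_n$ be a $K$-basis of $\mathrm{Prim}(H)$, and suppose the associated matrix $B=(b_{j,i})$ (defined by $t_i^p=\sum_j b_{j,i}t_j$) lies in $M_n(R)$. Let $A=(a_{j,i})\in M_n(R)$ and suppose there exists $\Theta=(\theta_{j,i})\in\mathrm{GL}_n(K)$ with $\Theta A=B\Theta^{(p)}$, where $\Theta^{(p)}=(\theta_{j,i}^p)$. Let \[H_0=R[u_1,\dots,u_n]\big/\Big(u_i^p-\sum_{j=1}^n a_{j,i}u_j : 1\le i\le n\Big),\qquad \Delta(u_i)=u_i\otimes 1+1\otimes u_i.\] Then $H_0$ can be embedded in $H$ as an $R$-Hopf order. Furthermore: (1) $H_0$ embeds in $H$ via $\Theta$, i.e. via $u_i\mapsto\sum_j\theta_{j,i}t_j$, so that its image is \[R\Big[\Big\{\sum_{j=1}^n\theta_{j,i}t_j : 1\le i\le n\Big\}\Big]\subseteq H;\] (2) if $A,A'\in M_n(R)$ and $\Theta,\Theta'\in\mathrm{GL}_n(K)$ satisfy $\Theta A=B\Theta^{(p)}$ and $\Theta'A'=B\Theta'^{(p)}$, and $H_0,H_0'$ denote the corresponding Hopf orders in $H$ obtained via the embeddings $\Theta,\Theta'$ as in (1), then $H_0=H_0'$ if and only if $\Theta^{-1}\Theta'\in \mathrm{GL}_n(R)$.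
   Context: All Hopf algebras are commutative, cocommutative, finitely generated projective, of $p$-power rank. $t$ is primitive if $\Delta(t)=t\otimes1+1\otimes t$; $\mathrm{Prim}(H)$ is the module of primitives; $H$ is primitively generated if generated as an algebra by its primitives. An $R$-Hopf order in a $K$-Hopf algebra $H$ is a finitely generated projective $R$-submodule $H_0\subseteq H$ which is an $R$-Hopf algebra under the operations inherited from $H$ with $KH_0=H$. *)

(* Defs.v *)
From HB Require Import structures.
From mathcomp Require Import all_boot all_order all_algebra all_field.
From mathcomp Require Import mpoly.
Set Implicit Arguments. Unset Strict Implicit. Unset Printing Implicit Defensive.
Import Order.TTheory GRing.Theory Num.Theory.
Local Open Scope ring_scope.

Definition is_dvr (K : fieldType) (R : K -> Prop) : Prop :=
  exists v : K -> int,
    [/\ (forall x y, x != 0 -> y != 0 -> v (x * y) = v x + v y),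
        (forall x y, x != 0 -> y != 0 -> x + y != 0 ->
            (v x <= v (x + y)) || (v y <= v (x + y))),
        (exists pi : K, pi != 0 /\ v pi = 1)
      & (forall x, R x <-> (x = 0 \/ 0 <= v x))].

Definition in_GLR (K : fieldType) (R : K -> Prop) (n : nat) (M : 'M[K]_n) :=
  [/\ M \in unitmx, (forall i j, R (M i j)) & (forall i j, R (invmx M i j))].

Definition frob_mx (K : fieldType) (p n : nat) (M : 'M[K]_n) : 'M[K]_n :=
  map_mx (fun x => x ^+ p) M.

Section HopfDefs.
Variables (K : fieldType) (H : falgType K).

(* H (x)_K H is represented by 'M_d (d = dim_K H) through coordinates in the
   canonical basis vbasis {:H} = (hbas i)_i of H : the element
   sum_ij M i j hbas i (x) hbas j is the matrix M, so x (x) y is the matrix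
   of products of coordinates. *)
Definition hbas (i : 'I_(\dim {:H})) : H := tnth (vbasis {:H}) i.
Definition tens (x y : H) : 'M[K]_(\dim {:H}) :=
  \matrix_(i, j) (coord (vbasis {:H}) i x * coord (vbasis {:H}) j y).
(* Multiplication of H (x) H : (a (x) b)(c (x) d) = ac (x) bd. *)
Definition tmul (M N : 'M[K]_(\dim {:H})) : 'M[K]_(\dim {:H}) :=
  \sum_(i < \dim {:H}) \sum_(j < \dim {:H})
   \sum_(k < \dim {:H}) \sum_(l < \dim {:H})
     (M i j * N k l) *: tens (hbas i * hbas k) (hbas j * hbas l).

Record hopf_data := HopfData {
  comul : H -> 'M[K]_(\dim {:H});
  counit : H -> K;
  antipode : H -> H }.

(* Commutative, cocommutative K-Hopf algebra structure on the finite
   dimensional K-algebra H (finitely generated projective is automatic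
   over the field K). *)
Definition is_cc_hopf (D : hopf_data) : Prop :=
  (forall x y : H, x * y = y * x) /\
  (forall (a : K) (x y : H), comul D (a *: x + y) = a *: comul D x + comul D y) /\
  (forall (a : K) (x y : H), counit D (a *: x + y) = a * counit D x + counit D y) /\
  (forall (a : K) (x y : H), antipode D (a *: x + y) = a *: antipode D x + antipode D y) /\
  comul D 1 = tens 1 1 /\
  (forall x y, comul D (x * y) = tmul (comul D x) (comul D y)) /\
  counit D 1 = 1 /\
  (forall x y, counit D (x * y) = counit D x * counit D y) /\
  (* coassociativity, in coordinates of H (x) H (x) H *)
  (forall x i j k, (\sum_a comul D x a k * comul D (hbas a) i j)
                 = (\sum_b comul D x i b * comul D (hbas b) j k)) /\
  (* counit axioms *)
  (forall x, (\sum_a \sum_b (comul D x a b * counit D (hbas a)) *: hbas b) = x) /\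
  (forall x, (\sum_a \sum_b (comul D x a b * counit D (hbas b)) *: hbas a) = x) /\
  (* antipode axioms *)
  (forall x, (\sum_a \sum_b comul D x a b *: (antipode D (hbas a) * hbas b))
             = counit D x *: 1) /\
  (forall x, (\sum_a \sum_b comul D x a b *: (hbas a * antipode D (hbas b)))
             = counit D x *: 1) /\
  (forall x, (comul D x)^T = comul D x).

Definition primitive (D : hopf_data) (x : H) : Prop :=
  comul D x = tens x 1 + tens 1 x.

Definition prim_generated (D : hopf_data) : Prop :=
  forall P : H -> Prop,
    (forall x, primitive D x -> P x) -> P 1 ->
    (forall x y, P x -> P y -> P (x + y)) ->
    (forall (a : K) x, P x -> P (a *: x)) ->
    (forall x y, P x -> P y -> P (x * y)) ->
    forall x, P x.

Definition prim_basis (D : hopf_data) (n : nat) (t : 'I_n -> H) : Prop :=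
  [/\ (forall i, primitive D (t i)),
      (forall c : 'I_n -> K, \sum_i c i *: t i = 0 -> forall i, c i = 0)
    & (forall x, primitive D x -> exists c : 'I_n -> K, x = \sum_i c i *: t i)].

Definition Rgen (R : K -> Prop) (n : nat) (s : 'I_n -> H) : H -> Prop :=
  fun x => forall P : H -> Prop,
    (forall i, P (s i)) -> P 1 ->
    (forall y z, P y -> P z -> P (y + z)) ->
    (forall (r : K) y, R r -> P y -> P (r *: y)) ->
    (forall y z, P y -> P z -> P (y * z)) ->
    P x.

Definition R_submodule (R : K -> Prop) (H0 : H -> Prop) : Prop :=
  [/\ H0 0, (forall x y, H0 x -> H0 y -> H0 (x + y))
    & (forall r x, R r -> H0 x -> H0 (r *: x))].

(* H0 is a finitely generated projective R-module: a surjection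
   R^m ->> H0, g, admitting an R-linear section sigma. *)
Definition fg_projective (R : K -> Prop) (H0 : H -> Prop) : Prop :=
  exists (m : nat) (g : 'I_m -> H) (sigma : H -> 'rV[K]_m),
    [/\ (forall i, H0 (g i)),
        (forall x, H0 x -> forall i, R (sigma x 0 i)),
        (forall x y, H0 x -> H0 y -> sigma (x + y) = sigma x + sigma y),
        (forall r x, R r -> H0 x -> sigma (r *: x) = r *: sigma x)
      & (forall x, H0 x -> x = \sum_i sigma x 0 i *: g i)].

(* An R-Hopf order in H. H0 (x)_R H0 is identified (H0 being projective)
   with the R-span of the x (x) y, x, y in H0, inside H (x)_K H. *)
Definition hopf_order (R : K -> Prop) (D : hopf_data) (H0 : H -> Prop) : Prop :=
  R_submodule R H0 /\ fg_projective R H0 /\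
  (forall x, exists (m : nat) (c : 'I_m -> K) (h : 'I_m -> H),
      (forall i, H0 (h i)) /\ x = \sum_i c i *: h i) /\
  H0 1 /\ (forall x y, H0 x -> H0 y -> H0 (x * y)) /\
  (forall x, H0 x -> exists (m : nat) (y z : 'I_m -> H),
      (forall i, H0 (y i) /\ H0 (z i)) /\ comul D x = \sum_i tens (y i) (z i)) /\
  (forall x, H0 x -> R (counit D x)) /\
  (forall x, H0 x -> H0 (antipode D x)).

End HopfDefs.

Definition theta_emb (K : fieldType) (H : falgType K) (n : nat)
    (t : 'I_n -> H) (Th : 'M[K]_n) : 'I_n -> H :=
  fun i => \sum_j Th j i *: t j.

Definition rel_poly (K : fieldType) (p n : nat) (A : 'M[K]_n) (i : 'I_n)
    : {mpoly K[n]} :=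
  'X_i ^+ p - \sum_j A j i *: 'X_j.

Definition eval_at (K : fieldType) (H : falgType K) (n : nat)
    (s : 'I_n -> H) (q : {mpoly K[n]}) : H :=
  mmap (fun c : K => c%:A) s q.

Definition R_poly (K : fieldType) (R : K -> Prop) (n : nat) (q : {mpoly K[n]}) :=
  forall m, R (q@_m).

(* Main.v *)
Require Import Defs.
From HB Require Import structures.
From mathcomp Require Import all_boot all_order all_algebra all_field.
From mathcomp Require Import mpoly.
From mathcomp Require Import zify.
Set Implicit Arguments. Unset Strict Implicit. Unset Printing Implicit Defensive.
Import GRing.Theory.
Local Open Scope ring_scope.
Section Rfacts.
Variables (K : fieldType) (R : K -> Prop).
Hypothesis dvr : is_dvr R.

Lemma v1_0 (v : K -> int) : (forall x y, x != 0 -> y != 0 -> v (x * y) = v x + v y) -> v 1 = 0.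
Proof.
move=> hM; have := hM 1 1 (oner_neq0 _) (oner_neq0 _); rewrite mulr1 => e.
by have := congr1 (fun z => z - v 1) e; rewrite /= subrr addrK.
Qed.

Lemma R0 : R 0. Proof. by case: dvr => v [_ _ _ h]; apply/h; left. Qed.

Lemma R1 : R 1.
Proof.
case: dvr => v [hM _ _ h]; apply/h; right.
by rewrite (v1_0 hM).
Qed.

Lemma RM x y : R x -> R y -> R (x * y).
Proof.
move=> hx0 hy0; case: dvr => v [hM _ _ h].
case: (proj1 (h x) hx0) => [->|hx]; first by rewrite mul0r; apply/h; left.
case: (proj1 (h y) hy0) => [->|hy]; first by rewrite mulr0; apply/h; left.
have [->|x0] := eqVneq x 0; first by rewrite mul0r; apply/h; left.
have [->|y0] := eqVneq y 0; first by rewrite mulr0; apply/h; left.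
apply/h; right; rewrite hM //; exact: Num.Theory.addr_ge0.
Qed.

Lemma RN1 : R (-1).
Proof.
case: dvr => v [hM _ _ h]; apply/h; right.
have n1 : (-1 : K) != 0 by rewrite oppr_eq0 oner_neq0.
have := hM (-1) (-1) n1 n1.
rewrite mulrNN mulr1 (v1_0 hM).
move=> e; have : v (-1) + v (-1) = 0 by rewrite -e.
move=> e2; have -> : v (-1) = 0 by lia.
by [].
Qed.

Lemma RN x : R x -> R (- x).
Proof. by move=> hx; rewrite -mulN1r; apply: RM => //; exact: RN1. Qed.

Lemma RD x y : R x -> R y -> R (x + y).
Proof.
move=> hx0 hy0; case: dvr => v [_ hU _ h].
case: (proj1 (h x) hx0) => [->|hx]; first by rewrite add0r.
case: (proj1 (h y) hy0) => [->|hy]; first by rewrite addr0.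
have [->|x0] := eqVneq x 0; first by rewrite add0r; apply/h; right.
have [->|y0] := eqVneq y 0; first by rewrite addr0; apply/h; right.
have [->|s0] := eqVneq (x + y) 0; first by apply/h; left.
apply/h; right; case/orP: (hU x y x0 y0 s0) => hh.
  exact: Order.POrderTheory.le_trans hx hh.
exact: Order.POrderTheory.le_trans hy hh.
Qed.

Lemma RB x y : R x -> R y -> R (x - y).
Proof. by move=> hx hy; apply: RD => //; apply: RN. Qed.

Lemma Rsum (I : Type) (r : seq I) (P : pred I) (F : I -> K) :
  (forall i, P i -> R (F i)) -> R (\sum_(i <- r | P i) F i).
Proof.
move=> hF; elim/big_ind: _ => //; [exact: R0 | exact: RD].
Qed.

Lemma Rnat k : R k%:R.
Proof. elim: k => [|k ih]; [exact: R0| by rewrite mulrS; apply: RD => //; exact: R1]. Qed.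

End Rfacts.
Section Main.
Variables (p : nat) (K : fieldType) (R : K -> Prop) (n : nat)
    (H : falgType K) (D : hopf_data H) (t : 'I_n -> H) (B : 'M[K]_n).
Hypotheses (pp : prime p) (chp : p \in [pchar K]) (dvr : is_dvr R)
  (hopf : is_cc_hopf D) (dimH : \dim {:H} = (p ^ n)%N) (pgen : prim_generated D)
  (pbas : prim_basis D t) (tpow : forall i, t i ^+ p = \sum_j B j i *: t j)
  (BR : forall i j, R (B i j)).

Lemma Hcomm : forall x y : H, x * y = y * x.
Proof. by case: hopf. Qed.

Definition Hc : Type := H.
HB.instance Definition _ := Falgebra.on Hc.
Lemma Hc_comm : commutative (@GRing.mul Hc). Proof. exact: Hcomm. Qed.
HB.instance Definition _ := GRing.PzRing_hasCommutativeMul.Build Hc Hc_comm.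

Definition tc : 'I_n -> Hc := t.

Lemma p_gt1 : (1 < p)%N. Proof. exact: prime_gt1. Qed.
Lemma p_gt0 : (0 < p)%N. Proof. exact: prime_gt0. Qed.

Lemma chpH : p \in [pchar Hc].
Proof. by rewrite (pchar_lalg Hc). Qed.

Lemma frobD (x y : Hc) : (x + y) ^+ p = x ^+ p + y ^+ p.
Proof. exact: (pFrobenius_autD_comm chpH (mulrC x y)). Qed.

Lemma frob_sum (I : Type) (r : seq I) (P : pred I) (F : I -> Hc) :
  (\sum_(i <- r | P i) F i) ^+ p = \sum_(i <- r | P i) F i ^+ p.
Proof.
apply: (big_morph (fun x : Hc => x ^+ p)); first exact: frobD.
by rewrite expr0n; case: p pp.
Qed.

Definition sc (Th : 'M[K]_n) (i : 'I_n) : Hc := \sum_j Th j i *: tc j.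

Lemma sum_coef (F : 'I_n -> 'I_n -> K) :
  \sum_j \sum_k F j k *: tc k = \sum_k (\sum_j F j k) *: tc k.
Proof. by rewrite exchange_big; apply: eq_bigr => k _; rewrite scaler_suml. Qed.

Lemma sum_coef2 (a : 'I_n -> K) (F : 'I_n -> 'I_n -> K) :
  \sum_j a j *: \sum_k F j k *: tc k = \sum_k (\sum_j a j * F j k) *: tc k.
Proof.
rewrite -sum_coef; apply: eq_bigr => j _; rewrite scaler_sumr.
by apply: eq_bigr => k _; rewrite scalerA.
Qed.

Lemma tpowc i : tc i ^+ p = \sum_j B j i *: tc j.
Proof. exact: tpow. Qed.

Lemma srel (A Th : 'M[K]_n) : Th *m A = B *m frob_mx p Th ->
  forall i, sc Th i ^+ p = \sum_j A j i *: sc Th j.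
Proof.
move=> eq i; rewrite /sc frob_sum.
under eq_bigr => j _ do rewrite exprZn tpowc.
rewrite !sum_coef2; apply: eq_bigr => k _; congr (_ *: _).
transitivity ((B *m frob_mx p Th) k i).
  by rewrite mxE; apply: eq_bigr => j _; rewrite mxE mulrC.
by rewrite -eq mxE; apply: eq_bigr => j _; rewrite mulrC.
Qed.
Implicit Types (x y z u v : H) (M N : 'M[K]_(\dim {:H})).
Lemma hbas_exp (x : H) : x = \sum_i coord (vbasis {:H}) i x *: hbas i.
Proof.
rewrite {1}(coord_vbasis (memvf x)); apply: eq_bigr => i _.
by rewrite /hbas (tnth_nth 0).
Qed.

Lemma tensDl (x y z : H) : tens (x + y) z = tens x z + tens y z.
Proof. by apply/matrixP => i j; rewrite !mxE linearD mulrDl. Qed.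
Lemma tensDr (x y z : H) : tens z (x + y) = tens z x + tens z y.
Proof. by apply/matrixP => i j; rewrite !mxE linearD mulrDr. Qed.
Lemma tensZl (a : K) (x z : H) : tens (a *: x) z = a *: tens x z.
Proof. by apply/matrixP => i j; rewrite !mxE linearZ /= mulrA. Qed.
Lemma tensZr (a : K) (x z : H) : tens z (a *: x) = a *: tens z x.
Proof. by apply/matrixP => i j; rewrite !mxE linearZ /= mulrCA. Qed.
Lemma tens0l (z : H) : tens 0 z = 0.
Proof. by apply/matrixP => i j; rewrite !mxE linear0 mul0r. Qed.
Lemma tens0r (z : H) : tens z 0 = 0.
Proof. by apply/matrixP => i j; rewrite !mxE linear0 mulr0. Qed.
Lemma tens_suml (I : Type) (r : seq I) (P : pred I) (F : I -> H) (z : H) :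
  tens (\sum_(i <- r | P i) F i) z = \sum_(i <- r | P i) tens (F i) z.
Proof. apply: (big_morph (fun x => tens x z)); [move=> ? ?; exact: tensDl| exact: tens0l]. Qed.
Lemma tens_sumr (I : Type) (r : seq I) (P : pred I) (F : I -> H) (z : H) :
  tens z (\sum_(i <- r | P i) F i) = \sum_(i <- r | P i) tens z (F i).
Proof. apply: (big_morph (fun x => tens z x)); [move=> ? ?; exact: tensDr| exact: tens0r]. Qed.

Section LinFacts.
Variables (V : lmodType K) (f : H -> V).
Hypothesis hf : forall (a : K) (x y : H), f (a *: x + y) = a *: f x + f y.
Lemma lf0 : f 0 = 0.
Proof.
have := hf 1 0 0; rewrite !scale1r addr0 => e.
by have := congr1 (fun w : V => w - f 0) e; rewrite /= subrr addrK.
Qed.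
Lemma lfD x y : f (x + y) = f x + f y.
Proof. by have := hf 1 x y; rewrite !scale1r. Qed.
Lemma lfZ a x : f (a *: x) = a *: f x.
Proof. by have := hf a x 0; rewrite !addr0 lf0 addr0. Qed.
Lemma lf_sum (I : Type) (r : seq I) (P : pred I) (F : I -> H) :
  f (\sum_(i <- r | P i) F i) = \sum_(i <- r | P i) f (F i).
Proof. apply: big_morph; [exact: lfD| exact: lf0]. Qed.
Lemma lf_coord x : \sum_i coord (vbasis {:H}) i x *: f (hbas i) = f x.
Proof.
rewrite {2}(hbas_exp x) lf_sum; apply: eq_bigr => i _; by rewrite lfZ.
Qed.
End LinFacts.

Lemma comul_lin : forall (a : K) (x y : H), comul D (a *: x + y) = a *: comul D x + comul D y.
Proof. by case: hopf => _ [h _]. Qed.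
Lemma counit_lin : forall (a : K) (x y : H), counit D (a *: x + y) = a * counit D x + counit D y.
Proof. by case: hopf => _ [_ [h _]]. Qed.
Lemma anti_lin : forall (a : K) (x y : H), antipode D (a *: x + y) = a *: antipode D x + antipode D y.
Proof. by case: hopf => _ [_ [_ [h _]]]. Qed.
Lemma comul1 : comul D 1 = tens 1 1.
Proof. by case: hopf => _ [_ [_ [_ [h _]]]]. Qed.
Lemma comulM x y : comul D (x * y) = tmul (comul D x) (comul D y).
Proof. by case: hopf => _ [_ [_ [_ [_ [h _]]]]]. Qed.
Lemma counit1 : counit D 1 = 1.
Proof. by case: hopf => _ [_ [_ [_ [_ [_ [h _]]]]]]. Qed.
Lemma counitM x y : counit D (x * y) = counit D x * counit D y.
Proof. by case: hopf => _ [_ [_ [_ [_ [_ [_ [h _]]]]]]]. Qed.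
Lemma coassoc x i j k : (\sum_a comul D x a k * comul D (hbas a) i j)
                 = (\sum_b comul D x i b * comul D (hbas b) j k).
Proof. by case: hopf => _ [_ [_ [_ [_ [_ [_ [_ [h _]]]]]]]]. Qed.
Lemma counitL x : (\sum_a \sum_b (comul D x a b * counit D (hbas a)) *: hbas b) = x.
Proof. by case: hopf => _ [_ [_ [_ [_ [_ [_ [_ [_ [h _]]]]]]]]]. Qed.
Lemma counitR x : (\sum_a \sum_b (comul D x a b * counit D (hbas b)) *: hbas a) = x.
Proof. by case: hopf => _ [_ [_ [_ [_ [_ [_ [_ [_ [_ [h _]]]]]]]]]]. Qed.
Lemma antiL x : (\sum_a \sum_b comul D x a b *: (antipode D (hbas a) * hbas b))
             = counit D x *: 1.
Proof. by case: hopf => _ [_ [_ [_ [_ [_ [_ [_ [_ [_ [_ [h _]]]]]]]]]]]. Qed.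
Lemma antiR x : (\sum_a \sum_b comul D x a b *: (hbas a * antipode D (hbas b)))
             = counit D x *: 1.
Proof. by case: hopf => _ [_ [_ [_ [_ [_ [_ [_ [_ [_ [_ [_ [h _]]]]]]]]]]]]. Qed.

Lemma comulD x y : comul D (x + y) = comul D x + comul D y. Proof. exact: (lfD (f := comul D) comul_lin). Qed.
Lemma comulZ a x : comul D (a *: x) = a *: comul D x. Proof. exact: (lfZ (f := comul D) comul_lin). Qed.
Lemma comul0 : comul D 0 = 0. Proof. exact: (lf0 (f := comul D) comul_lin). Qed.
Lemma counitD x y : counit D (x + y) = counit D x + counit D y. Proof. have := (lfD (V := K^o) (f := counit D) counit_lin x y). done. Qed.
Lemma counitZ a x : counit D (a *: x) = a * counit D x. Proof. exact: (lfZ (V := K^o) (f := counit D) counit_lin). Qed.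
Lemma counit0 : counit D 0 = 0. Proof. exact: (lf0 (V := K^o) (f := counit D) counit_lin). Qed.
Lemma antiD x y : antipode D (x + y) = antipode D x + antipode D y. Proof. exact: (lfD (f := antipode D) anti_lin). Qed.
Lemma antiZ a x : antipode D (a *: x) = a *: antipode D x. Proof. exact: (lfZ (f := antipode D) anti_lin). Qed.

Lemma prim_lin a x y : primitive D x -> primitive D y -> primitive D (a *: x + y).
Proof.
rewrite /primitive comul_lin => -> ->.
by rewrite tensDl tensDr tensZl tensZr scalerDr addrACA.
Qed.
Lemma prim0 : primitive D 0.
Proof. by rewrite /primitive comul0 tens0l tens0r addr0. Qed.
Lemma prim_sum (I : Type) (r : seq I) (P : pred I) (a : I -> K) (F : I -> H) :
  (forall i, P i -> primitive D (F i)) -> primitive D (\sum_(i <- r | P i) a i *: F i).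
Proof.
move=> hF; elim/big_rec: _ => [|i x Pi hx]; first exact: prim0.
by apply: prim_lin => //; apply: hF.
Qed.

Lemma one_neq0 : (1 : H) != 0. Proof. exact: oner_neq0. Qed.

Section Pair.
Variables (V : lmodType K) (Phi : H -> H -> V).
Hypothesis Phil : forall (a : K) x y z, Phi (a *: x + y) z = a *: Phi x z + Phi y z.
Hypothesis Phir : forall (a : K) x y z, Phi z (a *: x + y) = a *: Phi z x + Phi z y.
Definition pair (M : 'M[K]_(\dim {:H})) : V :=
  \sum_a \sum_b M a b *: Phi (hbas a) (hbas b).
Lemma pair_tens u v : pair (tens u v) = Phi u v.
Proof.
rewrite /pair.
have e1 : forall a, \sum_b tens u v a b *: Phi (hbas a) (hbas b)
             = coord (vbasis {:H}) a u *: Phi (hbas a) v.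
  move=> a; rewrite -(lf_coord (f := Phi (hbas a))) ?scaler_sumr; last first.
    by move=> c x y; apply: Phir.
  by apply: eq_bigr => b _; rewrite mxE scalerA.
rewrite (eq_bigr _ (fun a _ => e1 a)).
exact: (lf_coord (f := fun x => Phi x v)) => c x y; apply: Phil.
Qed.
Lemma pairD M N : pair (M + N) = pair M + pair N.
Proof.
rewrite /pair -big_split; apply: eq_bigr => a _; rewrite -big_split.
by apply: eq_bigr => b _; rewrite mxE scalerDl.
Qed.
Lemma pairZ c M : pair (c *: M) = c *: pair M.
Proof.
rewrite /pair scaler_sumr; apply: eq_bigr => a _; rewrite scaler_sumr.
by apply: eq_bigr => b _; rewrite mxE scalerA.
Qed.
Lemma pair0 : pair 0 = 0.
Proof. by rewrite /pair big1 // => a _; rewrite big1 // => b _; rewrite mxE scale0r. Qed.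
Lemma pair_sum (I : Type) (r : seq I) (P : pred I) (F : I -> 'M[K]_(\dim {:H})) :
  pair (\sum_(i <- r | P i) F i) = \sum_(i <- r | P i) pair (F i).
Proof. apply: big_morph; [exact: pairD | exact: pair0]. Qed.
End Pair.

Lemma counit_prim x : primitive D x -> counit D x = 0.
Proof.
move=> px; have := counitR x.
have -> : \sum_a \sum_b (comul D x a b * counit D (hbas b)) *: hbas a =
   pair (fun u v => counit D v *: u) (comul D x).
  by apply: eq_bigr => a _; apply: eq_bigr => b _; rewrite scalerA.
rewrite px pairD !pair_tens; last 4 first.
- by move=> c u v w; rewrite scalerDr scalerA mulrC -scalerA.
- by move=> c u v w; rewrite counitD counitZ scalerDl scalerA.
- by move=> c u v w; rewrite scalerDr scalerA mulrC -scalerA.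
- by move=> c u v w; rewrite counitD counitZ scalerDl scalerA.
rewrite counit1 scale1r => /eqP; rewrite addrC -subr_eq0 addrK scaler_eq0.
by rewrite (negbTE one_neq0) orbF => /eqP.
Qed.
Lemma pair_lin (V : lmodType K) (c : K) (P1 P2 : H -> H -> V) M :
  pair (fun u v => c *: P1 u v + P2 u v) M = c *: pair P1 M + pair P2 M.
Proof.
rewrite /pair scaler_sumr -big_split; apply: eq_bigr => a _.
rewrite scaler_sumr -big_split; apply: eq_bigr => b _.
by rewrite scalerDr !scalerA mulrC.
Qed.

Lemma pair_ext (V : lmodType K) (P1 P2 : H -> H -> V) M :
  (forall u v, P1 u v = P2 u v) -> pair P1 M = pair P2 M.
Proof. by move=> e; apply: eq_bigr => a _; apply: eq_bigr => b _; rewrite e. Qed.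

Definition phiN (N : 'M[K]_(\dim {:H})) (x y : H) : 'M[K]_(\dim {:H}) :=
  pair (fun u v => tens (x * u) (y * v)) N.

Lemma tmul_pair M N : tmul M N = pair (phiN N) M.
Proof.
rewrite /tmul /pair; apply: eq_bigr => i _; apply: eq_bigr => j _.
rewrite /phiN /pair scaler_sumr; apply: eq_bigr => k _.
rewrite scaler_sumr; apply: eq_bigr => l _; by rewrite scalerA.
Qed.

Lemma phiN_l N (c : K) x y z : phiN N (c *: x + y) z = c *: phiN N x z + phiN N y z.
Proof.
rewrite /phiN -pair_lin; apply: pair_ext => u v.
by rewrite mulrDl -scalerAl tensDl tensZl.
Qed.
Lemma phiN_r N (c : K) x y z : phiN N z (c *: x + y) = c *: phiN N z x + phiN N z y.
Proof.
rewrite /phiN -pair_lin; apply: pair_ext => u v.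
by rewrite mulrDl -scalerAl tensDr tensZr.
Qed.

Lemma tmul_tens (a b c d : H) : tmul (tens a b) (tens c d) = tens (a * c) (b * d).
Proof.
rewrite tmul_pair pair_tens; [|exact: phiN_l|exact: phiN_r].
rewrite /phiN pair_tens //.
- by move=> e x y z; rewrite mulrDr -scalerAr tensDl tensZl.
- by move=> e x y z; rewrite mulrDr -scalerAr tensDr tensZr.
Qed.

Lemma tmulDl M1 M2 N : tmul (M1 + M2) N = tmul M1 N + tmul M2 N.
Proof. by rewrite !tmul_pair pairD. Qed.
Lemma tmul0l N : tmul 0 N = 0.
Proof. by rewrite tmul_pair pair0. Qed.
Lemma tmulDr M N1 N2 : tmul M (N1 + N2) = tmul M N1 + tmul M N2.
Proof.
rewrite !tmul_pair.
transitivity (pair (fun u v => 1 *: phiN N1 u v + phiN N2 u v) M).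
  by apply: pair_ext => u v; rewrite /phiN pairD scale1r.
by rewrite pair_lin scale1r.
Qed.
Lemma tmul0r M : tmul M 0 = 0.
Proof.
rewrite tmul_pair (@pair_ext _ _ (fun _ _ => 0)).
  by rewrite /pair big1 // => a _; rewrite big1 // => b _; rewrite scaler0.
by move=> u v; rewrite /phiN pair0.
Qed.
Lemma tmul_suml (I : Type) (r : seq I) (P : pred I) F N :
  tmul (\sum_(i <- r | P i) F i) N = \sum_(i <- r | P i) tmul (F i) N.
Proof. apply: (big_morph (fun M => tmul M N)); [move=> ? ?; exact: tmulDl|exact: tmul0l]. Qed.
Lemma tmul_sumr (I : Type) (r : seq I) (P : pred I) F M :
  tmul M (\sum_(i <- r | P i) F i) = \sum_(i <- r | P i) tmul M (F i).
Proof. apply: (big_morph (fun N => tmul M N)); [move=> ? ?; exact: tmulDr|exact: tmul0r]. Qed.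
Section Emb.
Variables (A Th : 'M[K]_n).
Hypotheses (AR : forall i j, R (A i j)) (Thu : Th \in unitmx)
  (ThA : Th *m A = B *m frob_mx p Th).

Definition s : 'I_n -> Hc := sc Th.
Definition mono (m : 'X_{1..n}) : Hc := mmap1 s m.

Lemma srelA i : s i ^+ p = \sum_j A j i *: s j.
Proof. rewrite /s. have := srel ThA i. done. Qed.

Lemma monoD m1 m2 : mono (m1 + m2)%MM = mono m1 * mono m2.
Proof. by apply: commr_mmap1_M => i x; apply: mulrC. Qed.
Lemma monoU i : mono U_(i)%MM = s i.
Proof. exact: mmap1U. Qed.
Lemma mono0 : mono 0%MM = 1.
Proof. exact: mmap11. Qed.
Lemma monoUn i k : mono (U_(i) *+ k)%MM = s i ^+ k.
Proof.
elim: k => [|k ih]; first by rewrite mulm0n mono0 expr0.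
by rewrite mulmS monoD ih monoU exprS.
Qed.

Definition redm (m : 'X_{1..n}) i j := (m - U_(i) *+ p + U_(j))%MM.

Lemma mono_red (m : 'X_{1..n}) (i : 'I_n) : (p <= m i)%N ->
  mono m = \sum_j A j i *: mono (redm m i j).
Proof.
move=> hm.
have e : m = (m - U_(i) *+ p + U_(i) *+ p)%MM.
  apply/mnmP => k; rewrite mnmDE mnmBE mulmnE mnm1E.
  case: (eqVneq i k) => [<-|_]; first by rewrite mul1n subnK.
  by rewrite mul0n subn0 addn0.
rewrite {1}e monoD monoUn srelA mulr_sumr; apply: eq_bigr => j _.
by rewrite /redm monoD monoU scalerAr.
Qed.

Lemma mdeg_red (m : 'X_{1..n}) (i j : 'I_n) : (p <= m i)%N -> (mdeg (redm m i j) < mdeg m)%N.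
Proof.
move=> hm.
have e : m = (m - U_(i) *+ p + U_(i) *+ p)%MM.
  apply/mnmP => k; rewrite mnmDE mnmBE mulmnE mnm1E.
  case: (eqVneq i k) => [<-|_]; first by rewrite mul1n subnK.
  by rewrite mul0n subn0 addn0.
rewrite {2}e /redm !mdegD mdegMn !mdeg1 mul1n ltn_add2l.
exact: p_gt1.
Qed.

Definition Ex := {ffun 'I_n -> 'I_p}.
Definition me (e : Ex) : 'X_{1..n} := [multinom (e i : nat) | i < n].
Definition monoE (e : Ex) : Hc := mono (me e).

Lemma small_me (m : 'X_{1..n}) : (forall i, m i < p)%N -> exists e, m = me e.
Proof.
move=> hm; exists [ffun i => Ordinal (hm i)].
by apply/mnmP => k; rewrite mnmE ffunE.
Qed.

Section Span.
Variable Q : K -> Prop.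
Hypotheses (Q0 : Q 0) (Q1 : Q 1) (QD : forall x y : K, Q x -> Q y -> Q (x + y))
  (QM : forall x y : K, Q x -> Q y -> Q (x * y)) (QA : forall i j, Q (A i j)).

Definition Qspan (x : Hc) :=
  exists c : Ex -> K, (forall e, Q (c e)) /\ x = \sum_e c e *: monoE e.

Lemma Qspan0 : Qspan 0.
Proof. by exists (fun _ => 0); split => //; rewrite big1 // => e _; rewrite scale0r. Qed.

Lemma QspanD x y : Qspan x -> Qspan y -> Qspan (x + y).
Proof.
move=> [c [hc ->]] [d [hd ->]]; exists (fun e => c e + d e); split.
  by move=> e; apply: QD.
by rewrite -big_split; apply: eq_bigr => e _; rewrite scalerDl.
Qed.

Lemma QspanZ r x : Q r -> Qspan x -> Qspan (r *: x).
Proof.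
move=> hr [c [hc ->]]; exists (fun e => r * c e); split.
  by move=> e; apply: QM.
by rewrite scaler_sumr; apply: eq_bigr => e _; rewrite scalerA.
Qed.

Lemma Qspan_sum (I : Type) (r : seq I) (P : pred I) (F : I -> Hc) :
  (forall i, P i -> Qspan (F i)) -> Qspan (\sum_(i <- r | P i) F i).
Proof.
move=> hF; elim/big_rec: _ => [|i x Pi hx]; first exact: Qspan0.
by apply: QspanD => //; apply: hF.
Qed.

Lemma QspanE e : Qspan (monoE e).
Proof.
exists (fun e' => (e' == e)%:R); split.
  by move=> e'; case: (e' == e); [exact: Q1 | exact: Q0].
rewrite (bigD1 e) //= eqxx scale1r big1 ?addr0 // => e' /negbTE ->.
by rewrite scale0r.
Qed.

Lemma Qspan_mono (m : 'X_{1..n}) : Qspan (mono m).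
Proof.
move: {2}(mdeg m) (leqnn (mdeg m)) => d; elim: d m => [|d ih] m hd.
  have [e ->] : exists e, m = me e.
    apply: small_me => i; move: hd; rewrite leqn0 mdeg_eq0 => /eqP ->.
    by rewrite mnm0E; exact: p_gt0.
  exact: QspanE.
case: (boolP [forall i, m i < p]%N) => [/forallP hm|].
  by have [e ->] := small_me hm; exact: QspanE.
rewrite negb_forall => /existsP [i]; rewrite -leqNgt => hi.
rewrite (mono_red hi); apply: Qspan_sum => j _; apply: QspanZ => //.
apply: ih; rewrite -ltnS; apply: (leq_trans (mdeg_red j hi)) => //.
Qed.

Lemma QspanM x y : Qspan x -> Qspan y -> Qspan (x * y).
Proof.
move=> [c [hc ->]] [d [hd ->]]; rewrite mulr_suml; apply: Qspan_sum => e _.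
rewrite mulr_sumr; apply: Qspan_sum => e' _.
rewrite -scalerAl -scalerAr !scalerA; apply: QspanZ; first by apply: QM.
by rewrite /monoE -monoD; apply: Qspan_mono.
Qed.

Lemma Qspan1 : Qspan 1.
Proof. by rewrite -mono0; apply: Qspan_mono. Qed.
Lemma Qspan_s i : Qspan (s i).
Proof. by rewrite -monoU; apply: Qspan_mono. Qed.
End Span.
Lemma t_in_s j : tc j = \sum_k invmx Th k j *: s k.
Proof.
rewrite /s /sc sum_coef2.
have e : forall l, \sum_k invmx Th k j * Th l k = (l == j)%:R.
  move=> l; transitivity ((Th *m invmx Th) l j).
    by rewrite mxE; apply: eq_bigr => k _; rewrite mulrC.
  by rewrite mulmxV // mxE.
under eq_bigr => l _ do rewrite e.
rewrite (bigD1 j) //= eqxx scale1r big1 ?addr0 // => l /negbTE ->.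
by rewrite scale0r.
Qed.

Let QT := fun _ : K => True.
Let Qspan_T := Qspan QT.

Lemma span_all (x : Hc) : Qspan QT x.
Proof.
have QTA : forall i j, QT (A i j) by [].
apply: (pgen (P := Qspan QT)).
- move=> y py; have [_ _ hb] := pbas; have [c ->] := hb y py.
  apply: Qspan_sum => // i _; apply: QspanZ => //.
  change (Qspan QT (tc i)); rewrite t_in_s; apply: Qspan_sum => // k _.
  by apply: QspanZ => //; apply: Qspan_s.
- exact: Qspan1.
- move=> y z; exact: QspanD.
- move=> a y; exact: QspanZ.
- move=> y z; exact: QspanM.
Qed.

Definition Xb : #|Ex|.-tuple Hc := [tuple monoE (enum_val i) | i < #|Ex|].

Lemma Xb_nth (i : 'I_#|Ex|) : Xb`_i = monoE (enum_val i).
Proof. by rewrite -(tnth_nth 0) tnth_mktuple. Qed.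

Lemma sum_reindex (V : zmodType) (F : Ex -> V) :
  \sum_e F e = \sum_(i < #|Ex|) F (enum_val i).
Proof. by rewrite (reindex (fun i : 'I_#|Ex| => enum_val i)) //; apply: onW_bij; exact: enum_val_bij. Qed.

Lemma Xb_basis : basis_of fullv Xb.
Proof.
rewrite basisEdim; apply/andP; split.
  apply/subvP => x _; have [c [_ ->]] := span_all x.
  apply: memv_suml => e _; apply: memvZ; apply: memv_span.
  rewrite -(enum_rankK e) -Xb_nth; apply: mem_nth; rewrite size_tuple; exact: ltn_ord.
rewrite size_tuple card_ffun !card_ord.
have -> : \dim (fullv : {vspace Hc}) = \dim (fullv : {vspace H}) by [].
by rewrite dimH.
Qed.

Lemma indep (c : Ex -> K) : \sum_e c e *: monoE e = 0 -> forall e, c e = 0.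
Proof.
move=> h e; move/freeP: (basis_free Xb_basis) => fP.
rewrite -(enum_rankK e); apply: (fP (fun i => c (enum_val i))).
rewrite -[RHS]h sum_reindex; apply: eq_bigr => i _; by rewrite Xb_nth.
Qed.

Lemma coef_uniq (c d : Ex -> K) :
  \sum_e c e *: monoE e = \sum_e d e *: monoE e -> forall e, c e = d e.
Proof.
move=> h e; apply/eqP; rewrite -subr_eq0; apply/eqP.
apply: (indep (c := fun e => c e - d e)).
under eq_bigr => e' _ do rewrite scalerBl.
by rewrite sumrB h subrr.
Qed.

Lemma span_ex (x : Hc) : exists c : {ffun Ex -> K}, x == \sum_e c e *: monoE e.
Proof. have [c [_ ->]] := span_all x; by exists [ffun e => c e]; apply/eqP; apply: eq_bigr => e _; rewrite ffunE. Qed.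

Definition co (x : Hc) : Ex -> K := xchoose (span_ex x).

Lemma co_spec (x : Hc) : x = \sum_e co x e *: monoE e.
Proof. exact/eqP/(xchooseP (span_ex x)). Qed.

Lemma co_sum (c : Ex -> K) e : co (\sum_e c e *: monoE e) e = c e.
Proof. by apply: coef_uniq; rewrite -co_spec. Qed.

Lemma co_lin (a : K) (x y : Hc) e : co (a *: x + y) e = a * co x e + co y e.
Proof.
rewrite {1}(co_spec x) {1}(co_spec y) scaler_sumr -big_split /=.
rewrite -(co_sum (fun e => a * co x e + co y e)); congr (co _ e).
by apply: eq_bigr => e' _; rewrite scalerDl scalerA.
Qed.

Lemma co_R (x : Hc) e : Qspan R x -> R (co x e).
Proof. by move=> [c [hc ->]]; rewrite co_sum. Qed.

Definition G0 : H -> Prop := Rgen R (theta_emb t Th).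

Lemma G0_s i : G0 (s i).
Proof. by move=> P h1 _ _ _ _; apply: h1. Qed.
Lemma G0_1 : G0 1.
Proof. by move=> P _ h2 _ _ _. Qed.
Lemma G0_add x y : G0 x -> G0 y -> G0 (x + y).
Proof. by move=> hx hy P h1 h2 h3 h4 h5; exact: (h3 _ _ (hx P h1 h2 h3 h4 h5) (hy P h1 h2 h3 h4 h5)). Qed.
Lemma G0_scale r x : R r -> G0 x -> G0 (r *: x).
Proof. by move=> hr hx P h1 h2 h3 h4 h5; exact: (h4 _ _ hr (hx P h1 h2 h3 h4 h5)). Qed.
Lemma G0_mul x y : G0 x -> G0 y -> G0 (x * y).
Proof. by move=> hx hy P h1 h2 h3 h4 h5; exact: (h5 _ _ (hx P h1 h2 h3 h4 h5) (hy P h1 h2 h3 h4 h5)). Qed.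
Lemma G0_0 : G0 0.
Proof. by rewrite -(scale0r 1); apply: G0_scale; [exact: R0|exact: G0_1]. Qed.
Lemma G0_sum (I : Type) (r : seq I) (P : pred I) (F : I -> H) :
  (forall i, P i -> G0 (F i)) -> G0 (\sum_(i <- r | P i) F i).
Proof.
move=> hF; elim/big_rec: _ => [|i x Pi hx]; first exact: G0_0.
by apply: G0_add => //; apply: hF.
Qed.
Lemma G0_mono m : G0 (mono m).
Proof.
rewrite /mono /mmap1; elim/big_rec: _ => [|i x _ hx]; first exact: G0_1.
apply: G0_mul => //; elim: (m i) => [|k ih]; first by rewrite expr0; exact: G0_1.
by rewrite exprS; apply: G0_mul => //; exact: G0_s.
Qed.

Lemma span_G0 x : Qspan R x -> G0 x.
Proof.
move=> [c [hc ->]]; apply: G0_sum => e _; apply: G0_scale => //; exact: G0_mono.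
Qed.

Lemma G0_span x : G0 x -> Qspan R x.
Proof.
move=> hx; apply: hx.
- move=> i; exact: (Qspan_s (R0 dvr) (R1 dvr) (RD dvr) (RM dvr) AR).
- exact: (Qspan1 (R0 dvr) (R1 dvr) (RD dvr) (RM dvr) AR).
- move=> y z hy hz; exact: (QspanD (RD dvr) hy hz).
- move=> r y hr hy; exact: (QspanZ (RM dvr) hr hy).
- move=> y z; exact: (QspanM (R0 dvr) (R1 dvr) (RD dvr) (RM dvr) AR).
Qed.
Implicit Types (q : {mpoly K[n]}).
Definition ev (q : {mpoly K[n]}) : Hc := mmap (in_alg Hc) s q.

Lemma ev_eval q : eval_at (theta_emb t Th) q = ev q.
Proof. by []. Qed.

Lemma evD (q1 q2 : {mpoly K[n]}) : ev (q1 + q2) = ev q1 + ev q2. Proof. exact: rmorphD. Qed.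
Lemma evB (q1 q2 : {mpoly K[n]}) : ev (q1 - q2) = ev q1 - ev q2. Proof. exact: rmorphB. Qed.
Lemma evXn q k : ev (q ^+ k) = ev q ^+ k. Proof. exact: rmorphXn. Qed.
Lemma evM (q1 q2 : {mpoly K[n]}) : ev (q1 * q2) = ev q1 * ev q2. Proof. exact: rmorphM. Qed.
Lemma evZ c q : ev (c *: q) = c *: ev q.
Proof. by rewrite /ev mmapZ /= mulr_algl. Qed.
Lemma evX m : ev 'X_[m] = mono m.
Proof. by rewrite /ev mmapX. Qed.
Lemma ev_sum (I : Type) (r : seq I) (P : pred I) (F : I -> {mpoly K[n]}) :
  ev (\sum_(i <- r | P i) F i) = \sum_(i <- r | P i) ev (F i).
Proof. exact: rmorph_sum. Qed.

Lemma ev_rel i : ev (rel_poly p A i) = 0.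
Proof.
rewrite /rel_poly evB evXn ev_sum evX monoU srelA.
under [X in _ - X = _]eq_bigr => j _ do rewrite evZ evX monoU.
by rewrite subrr.
Qed.

Lemma R_poly0 : R_poly R (0 : {mpoly K[n]}).
Proof. by move=> m; rewrite mcoeff0; exact: R0. Qed.
Lemma R_polyD (q1 q2 : {mpoly K[n]}) : R_poly R q1 -> R_poly R q2 -> R_poly R (q1 + q2).
Proof. by move=> h1 h2 m; rewrite mcoeffD; apply: RD. Qed.
Lemma R_polyZ c q : R c -> R_poly R q -> R_poly R (c *: q).
Proof. by move=> hc h m; rewrite mcoeffZ; apply: RM. Qed.
Lemma R_polyX m : R_poly R ('X_[m] : {mpoly K[n]}).
Proof. by move=> m'; rewrite mcoeffX; apply: Rnat. Qed.

Definition Dec (q : {mpoly K[n]}) :=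
  exists g : 'I_n -> {mpoly K[n]}, (forall i, R_poly R (g i)) /\
  exists c : Ex -> K, (forall e, R (c e)) /\
    q = \sum_i g i * rel_poly p A i + \sum_e c e *: 'X_[me e].

Lemma Dec0 : Dec 0.
Proof.
exists (fun _ => 0); split=> [i|]; first exact: R_poly0.
exists (fun _ => 0); split=> [e|]; first exact: R0.
by rewrite !big1 ?addr0 // => ? _; rewrite ?mul0r ?scale0r.
Qed.

Lemma DecD (q1 q2 : {mpoly K[n]}) : Dec q1 -> Dec q2 -> Dec (q1 + q2).
Proof.
move=> [g1 [hg1 [c1 [hc1 ->]]]] [g2 [hg2 [c2 [hc2 ->]]]].
exists (fun i => g1 i + g2 i); split=> [i|]; first exact: R_polyD.
exists (fun e => c1 e + c2 e); split=> [e|]; first exact: RD.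
rewrite addrACA -!big_split /=; congr (_ + _); apply: eq_bigr => ? _.
  by rewrite mulrDl.
by rewrite scalerDl.
Qed.

Lemma DecZ r q : R r -> Dec q -> Dec (r *: q).
Proof.
move=> hr [g [hg [c [hc ->]]]].
exists (fun i => r *: g i); split=> [i|]; first exact: R_polyZ.
exists (fun e => r * c e); split=> [e|]; first exact: RM.
rewrite scalerDr !scaler_sumr; congr (_ + _); apply: eq_bigr => ? _.
  by rewrite scalerAl.
by rewrite scalerA.
Qed.

Lemma Dec_sum (I : Type) (rr : seq I) (P : pred I) (F : I -> {mpoly K[n]}) :
  (forall i, P i -> Dec (F i)) -> Dec (\sum_(i <- rr | P i) F i).
Proof.
move=> hF; elim/big_rec: _ => [|i x Pi hx]; first exact: Dec0.
by apply: DecD => //; apply: hF.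
Qed.

Lemma DecE e : Dec 'X_[me e].
Proof.
exists (fun _ => 0); split=> [i|]; first exact: R_poly0.
exists (fun e' => (e' == e)%:R); split=> [e'|]; first exact: Rnat.
rewrite big1 ?add0r; last by move=> ? _; rewrite mul0r.
rewrite (bigD1 e) //= eqxx scale1r big1 ?addr0 // => e' /negbTE ->.
by rewrite scale0r.
Qed.

Lemma Dec_rel (m : 'X_{1..n}) i : Dec ('X_[m] * rel_poly p A i).
Proof.
exists (fun j => if j == i then 'X_[m] else 0); split=> [j|].
  by case: (j == i); [exact: R_polyX | exact: R_poly0].
exists (fun _ => 0); split=> [e|]; first exact: R0.
rewrite [X in _ = _ + X]big1 ?addr0; last by move=> ? _; rewrite scale0r.
rewrite (bigD1 i) //= eqxx big1 ?addr0 // => j /negbTE ->.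
by rewrite mul0r.
Qed.

Lemma Dec_X (m : 'X_{1..n}) : Dec 'X_[m].
Proof.
move: {2}(mdeg m) (leqnn (mdeg m)) => d; elim: d m => [|d ih] m hd.
  have [e ->] : exists e, m = me e.
    apply: small_me => i; move: hd; rewrite leqn0 mdeg_eq0 => /eqP ->.
    by rewrite mnm0E; exact: p_gt0.
  exact: DecE.
case: (boolP [forall i, m i < p]%N) => [/forallP hm|].
  by have [e ->] := small_me hm; exact: DecE.
rewrite negb_forall => /existsP [i]; rewrite -leqNgt => hi.
have e : m = (m - U_(i) *+ p + U_(i) *+ p)%MM.
  apply/mnmP => k; rewrite mnmDE mnmBE mulmnE mnm1E.
  case: (eqVneq i k) => [<-|_]; first by rewrite mul1n subnK.
  by rewrite mul0n subn0 addn0.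
have eX : 'X_[m] = 'X_[m - U_(i) *+ p] * rel_poly p A i +
            \sum_j A j i *: 'X_[redm m i j] :> {mpoly K[n]}.
  rewrite {1}e mpolyXD -mpolyXn /rel_poly mulrBr mulr_sumr.
  rewrite -addrA [X in _ + X](_ : _ = 0) ?addr0 // addrC; apply/eqP; rewrite subr_eq0; apply/eqP.
  by apply: eq_bigr => j _; rewrite /redm mpolyXD scalerAr.
rewrite eX; apply: DecD; first exact: Dec_rel.
apply: Dec_sum => j _; apply: DecZ => //; apply: ih.
rewrite -ltnS; exact: (leq_trans (mdeg_red j hi)).
Qed.
Lemma inj_part q : R_poly R q -> eval_at (theta_emb t Th) q = 0 ->
  exists g : 'I_n -> {mpoly K[n]},
    (forall i, R_poly R (g i)) /\ q = \sum_i g i * rel_poly p A i.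
Proof.
move=> hq h0.
have [g [hg [c [hc eq]]]] : Dec q.
  rewrite (mpolyE q); apply: Dec_sum => m _; apply: DecZ; [exact: hq | exact: Dec_X].
exists g; split => //.
have : ev q = 0 by rewrite -ev_eval.
rewrite {1}eq evD ev_sum big1 ?add0r; last by move=> i _; rewrite evM ev_rel mulr0.
rewrite ev_sum; under eq_bigr => e _ do rewrite evZ evX.
move=> h; have c0 := indep h.
by rewrite eq [X in _ + X]big1 ?addr0 // => e _; rewrite c0 scale0r.
Qed.

Lemma s_prim i : primitive D (s i).
Proof.
have [tp _ _] := pbas.
change (primitive D (\sum_j Th j i *: t j)).
by apply: prim_sum => j _; apply: tp.
Qed.

Definition CT (M : 'M[K]_(\dim {:H})) := exists m (y z : 'I_m -> H),
  (forall i, G0 (y i) /\ G0 (z i)) /\ M = \sum_i tens (y i) (z i).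

Lemma CT0 : CT 0.
Proof. exists 0%N, (fun _ => 0), (fun _ => 0); split; [by case | by rewrite big_ord0]. Qed.

Lemma CT_tens y z : G0 y -> G0 z -> CT (tens y z).
Proof. by move=> hy hz; exists 1%N, (fun _ => y), (fun _ => z); split=> //; rewrite big_ord1. Qed.

Lemma CT_add M N : CT M -> CT N -> CT (M + N).
Proof.
move=> [m1 [y1 [z1 [h1 ->]]]] [m2 [y2 [z2 [h2 ->]]]].
exists (m1 + m2)%N.
exists (fun k => match split k with inl a => y1 a | inr b => y2 b end).
exists (fun k => match split k with inl a => z1 a | inr b => z2 b end).
split.
  by move=> k; case: (split k) => a; [apply: h1|apply: h2].
rewrite big_split_ord /=; congr (_ + _); apply: eq_bigr => i _.
  by rewrite (unsplitK (inl i)).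
by rewrite (unsplitK (inr i)).
Qed.

Lemma CT_sum (I : Type) (r : seq I) (P : pred I) (F : I -> 'M[K]_(\dim {:H})) :
  (forall i, P i -> CT (F i)) -> CT (\sum_(i <- r | P i) F i).
Proof.
move=> hF; elim/big_rec: _ => [|i x Pi hx]; first exact: CT0.
by apply: CT_add => //; apply: hF.
Qed.

Lemma CT_scale a M : R a -> CT M -> CT (a *: M).
Proof.
move=> ha [m [y [z [h ->]]]]; exists m, (fun i => a *: y i), z; split.
  by move=> i; have [hy hz] := h i; split => //; apply: G0_scale.
by rewrite scaler_sumr; apply: eq_bigr => i _; rewrite tensZl.
Qed.

Lemma CT_tmul M N : CT M -> CT N -> CT (tmul M N).
Proof.
move=> [m1 [y1 [z1 [h1 ->]]]] [m2 [y2 [z2 [h2 ->]]]].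
rewrite tmul_suml; apply: CT_sum => i _; rewrite tmul_sumr; apply: CT_sum => j _.
rewrite tmul_tens; have [a1 b1] := h1 i; have [a2 b2] := h2 j.
by apply: CT_tens; apply: G0_mul.
Qed.

Lemma G0_comul x : G0 x -> CT (comul D x).
Proof.
move=> hx; apply: (hx (fun x => CT (comul D x))).
- move=> i; rewrite (s_prim i); apply: CT_add; apply: CT_tens;
    (exact: G0_s || exact: G0_1).
- by rewrite comul1; apply: CT_tens; exact: G0_1.
- by move=> y z hy hz; rewrite comulD; apply: CT_add.
- by move=> r y hr hy; rewrite comulZ; apply: CT_scale.
- by move=> y z hy hz; rewrite comulM; apply: CT_tmul.
Qed.

Lemma G0_counit x : G0 x -> R (counit D x).
Proof.
move=> hx; apply: (hx (fun x => R (counit D x))).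
- by move=> i; rewrite (counit_prim (s_prim i)); exact: R0.
- by rewrite counit1; exact: R1.
- by move=> y z hy hz; rewrite counitD; apply: RD.
- by move=> r y hr hy; rewrite counitZ; apply: RM.
- by move=> y z hy hz; rewrite counitM; apply: RM.
Qed.
Lemma sum4_swap (V : zmodType) (d : nat) (F : 'I_d -> 'I_d -> 'I_d -> 'I_d -> V) :
  \sum_a \sum_b \sum_i \sum_j F a b i j = \sum_a \sum_i \sum_j \sum_b F a b i j.
Proof.
apply: eq_bigr => a _; rewrite exchange_big; apply: eq_bigr => i _.
by rewrite exchange_big.
Qed.

Lemma coassoc_sum (V : lmodType K) (W : 'I_(\dim {:H}) -> 'I_(\dim {:H}) -> 'I_(\dim {:H}) -> V) x :
  \sum_a \sum_b comul D x a b *: \sum_i \sum_j comul D (hbas b) i j *: W a i j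
  = \sum_b \sum_j comul D x b j *: \sum_a \sum_i comul D (hbas b) a i *: W a i j.
Proof.
have eL : \sum_a \sum_b comul D x a b *: \sum_i \sum_j comul D (hbas b) i j *: W a i j
  = \sum_a \sum_i \sum_j (\sum_b comul D x a b * comul D (hbas b) i j) *: W a i j.
  under [RHS]eq_bigr => a _ do under eq_bigr => i _ do under eq_bigr => j _ do rewrite scaler_suml.
  rewrite -sum4_swap; apply: eq_bigr => a _; apply: eq_bigr => b _.
  rewrite scaler_sumr; apply: eq_bigr => i _; rewrite scaler_sumr.
  by apply: eq_bigr => j _; rewrite scalerA.
have eR : \sum_b \sum_j comul D x b j *: \sum_a \sum_i comul D (hbas b) a i *: W a i j
  = \sum_a \sum_i \sum_j (\sum_b comul D x b j * comul D (hbas b) a i) *: W a i j.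
  under [RHS]eq_bigr => a _ do under eq_bigr => i _ do under eq_bigr => j _ do rewrite scaler_suml.
  have -> : \sum_b \sum_j comul D x b j *: \sum_a \sum_i comul D (hbas b) a i *: W a i j
     = \sum_b \sum_j \sum_a \sum_i (comul D x b j * comul D (hbas b) a i) *: W a i j.
    apply: eq_bigr => b _; apply: eq_bigr => j _.
    rewrite scaler_sumr; apply: eq_bigr => a _; rewrite scaler_sumr.
    by apply: eq_bigr => i _; rewrite scalerA.
  rewrite exchange_big /=.
  under eq_bigr => j _ do rewrite exchange_big /=.
  rewrite exchange_big /=.
  under eq_bigr => a _ do under eq_bigr => j _ do rewrite exchange_big /=.
  under eq_bigr => a _ do rewrite exchange_big /=.
  done.
rewrite eL eR; apply: eq_bigr => a _; apply: eq_bigr => i _; apply: eq_bigr => j _.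
by rewrite coassoc.
Qed.
Lemma T_eq_S (T : H -> H)
  (Tlin : forall (a : K) x y, T (a *: x + y) = a *: T x + T y)
  (Tc : forall z, pair (fun u v => T u * v) (comul D z) = counit D z *: 1) x :
  T x = antipode D x.
Proof.
set W := fun a i j => T (hbas a) * (hbas i * antipode D (hbas j)).
have e1 : T x = \sum_a \sum_b comul D x a b *: (counit D (hbas b) *: T (hbas a)).
  rewrite -{1}(counitR x) (lf_sum Tlin); apply: eq_bigr => a _.
  rewrite (lf_sum Tlin); apply: eq_bigr => b _.
  by rewrite (lfZ Tlin) scalerA.
have e2 : forall a b, counit D (hbas b) *: T (hbas a) =
    \sum_i \sum_j comul D (hbas b) i j *: W a i j.
  move=> a b.
  have -> : counit D (hbas b) *: T (hbas a) = T (hbas a) * (counit D (hbas b) *: 1).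
    by rewrite -scalerAr mulr1.
  rewrite -(antiR (hbas b)) mulr_sumr.
  apply: eq_bigr => i _; rewrite mulr_sumr; apply: eq_bigr => j _.
  by rewrite -scalerAr.
have e3 : T x = \sum_b \sum_j comul D x b j *:
     ((\sum_a \sum_i comul D (hbas b) a i *: (T (hbas a) * hbas i)) * antipode D (hbas j)).
  rewrite e1; under eq_bigr => a _ do under eq_bigr => b _ do rewrite e2.
  rewrite coassoc_sum.
  apply: eq_bigr => b _; apply: eq_bigr => j _; congr (_ *: _).
  rewrite mulr_suml; apply: eq_bigr => a _; rewrite mulr_suml; apply: eq_bigr => i _.
  by rewrite -scalerAl /W mulrA.
have ep : forall b, \sum_a \sum_i comul D (hbas b) a i *: (T (hbas a) * hbas i)
    = counit D (hbas b) *: 1 := fun b => Tc (hbas b).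
rewrite e3.
under eq_bigr => b _ do under eq_bigr => j _ do rewrite ep -scalerAl mul1r scalerA.
rewrite -{2}(counitL x) (lf_sum anti_lin); apply: eq_bigr => b _.
by rewrite (lf_sum anti_lin); apply: eq_bigr => j _; rewrite (lfZ anti_lin).
Qed.
Lemma m1p : (-1 : K) ^+ p = -1.
Proof. by apply: etrans (pFrobenius_autN chp 1) _; rewrite pFrobenius_autE expr1n. Qed.

Definition sg (m : 'X_{1..n}) : K := (-1) ^+ mdeg m.

Lemma sgD m1 m2 : sg (m1 + m2)%MM = sg m1 * sg m2.
Proof. by rewrite /sg mdegD exprD. Qed.

Lemma sg_red (m : 'X_{1..n}) i j : (p <= m i)%N -> sg (redm m i j) = sg m.
Proof.
move=> hm.
have e : m = (m - U_(i) *+ p + U_(i) *+ p)%MM.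
  apply/mnmP => k; rewrite mnmDE mnmBE mulmnE mnm1E.
  case: (eqVneq i k) => [<-|_]; first by rewrite mul1n subnK.
  by rewrite mul0n subn0 addn0.
by rewrite {2}e /redm /sg !mdegD mdegMn !mdeg1 mul1n !exprD m1p expr1.
Qed.

Definition Tm (x : Hc) : Hc := \sum_e co x e *: (sg (me e) *: monoE e).

Lemma Tlin (a : K) (x y : Hc) : Tm (a *: x + y) = a *: Tm x + Tm y.
Proof.
rewrite /Tm scaler_sumr -big_split; apply: eq_bigr => e _.
by rewrite co_lin scalerDl [in RHS]scalerA.
Qed.

Lemma T0 : Tm 0 = 0.
Proof.
have := Tlin 1 0 0; rewrite !scale1r addr0 => e.
by have := congr1 (fun w : Hc => w - Tm 0) e; rewrite /= subrr addrK.
Qed.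
Lemma TD (x y : Hc) : Tm (x + y) = Tm x + Tm y.
Proof. by have := Tlin 1 x y; rewrite !scale1r. Qed.
Lemma TZ (a : K) (x : Hc) : Tm (a *: x) = a *: Tm x.
Proof. by rewrite -[a *: x]addr0 Tlin T0 addr0. Qed.
Lemma Tsum (I : Type) (r : seq I) (P : pred I) (F : I -> Hc) :
  Tm (\sum_(i <- r | P i) F i) = \sum_(i <- r | P i) Tm (F i).
Proof. apply: big_morph; [exact: TD | exact: T0]. Qed.

Lemma co_monoE e e' : co (monoE e) e' = (e' == e)%:R.
Proof.
have -> : monoE e = \sum_e2 (e2 == e)%:R *: monoE e2.
  rewrite (bigD1 e) //= eqxx scale1r big1 ?addr0 // => e2 /negbTE ->.
  by rewrite scale0r.
by rewrite co_sum.
Qed.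

Lemma T_monoE e : Tm (monoE e) = sg (me e) *: monoE e.
Proof.
rewrite /Tm (bigD1 e) //= co_monoE eqxx scale1r big1 ?addr0 // => e2 /negbTE ne.
by rewrite co_monoE ne scale0r.
Qed.

Lemma T_mono m : Tm (mono m) = sg m *: mono m.
Proof.
move: {2}(mdeg m) (leqnn (mdeg m)) => d; elim: d m => [|d ih] m hd.
  have [e ->] : exists e, m = me e.
    apply: small_me => i; move: hd; rewrite leqn0 mdeg_eq0 => /eqP ->.
    by rewrite mnm0E; exact: p_gt0.
  exact: T_monoE.
case: (boolP [forall i, m i < p]%N) => [/forallP hm|].
  by have [e ->] := small_me hm; exact: T_monoE.
rewrite negb_forall => /existsP [i]; rewrite -leqNgt => hi.
rewrite (mono_red hi) Tsum scaler_sumr; apply: eq_bigr => j _.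
rewrite TZ ih; last by rewrite -ltnS; exact: (leq_trans (mdeg_red j hi)).
by rewrite sg_red // !scalerA mulrC.
Qed.

Lemma TM (x y : Hc) : Tm (x * y) = Tm x * Tm y.
Proof.
rewrite {1}(co_spec x) {1}(co_spec y) mulr_suml Tsum.
rewrite [in RHS]/Tm mulr_suml; apply: eq_bigr => e _.
rewrite mulr_sumr Tsum mulr_sumr; apply: eq_bigr => e' _.
rewrite -scalerAl -scalerAr TZ TZ /monoE -monoD T_mono.
rewrite sgD monoD -!scalerAl -!scalerAr !scalerA; congr (_ *: _).
by rewrite -!mulrA; congr (_ * _); rewrite mulrCA.
Qed.

Lemma T1 : Tm 1 = 1.
Proof. by rewrite -mono0 T_mono /sg mdeg0 expr0 scale1r. Qed.

Lemma Ts i : Tm (s i) = - s i.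
Proof. by rewrite -monoU T_mono /sg mdeg1 expr1 scaleN1r. Qed.

Lemma T_prim (x : Hc) : primitive D x -> Tm x = - x.
Proof.
move=> px; have [_ _ hb] := pbas; have [c ->] := hb x px.
have Tt : forall j, Tm (tc j) = - tc j.
  move=> j; rewrite t_in_s Tsum -sumrN; apply: eq_bigr => k _.
  by rewrite TZ Ts scalerN.
change (Tm (\sum_i c i *: tc i) = - \sum_i c i *: tc i).
rewrite Tsum -sumrN; apply: eq_bigr => j _.
by rewrite TZ Tt scalerN.
Qed.

Definition PhiT (u v : H) : H := (Tm u : H) * v.

Lemma PhiT_l (a : K) x y z : PhiT (a *: x + y) z = a *: PhiT x z + PhiT y z.
Proof. by rewrite /PhiT Tlin mulrDl -scalerAl. Qed.
Lemma PhiT_r (a : K) x y z : PhiT z (a *: x + y) = a *: PhiT z x + PhiT z y.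
Proof. by rewrite /PhiT mulrDr -scalerAr. Qed.

Lemma pair_tmulT M N : pair PhiT (tmul M N) = pair PhiT M * pair PhiT N.
Proof.
rewrite tmul_pair.
have -> : pair (phiN N) M = \sum_a \sum_b M a b *: phiN N (hbas a) (hbas b) by [].
rewrite pair_sum [X in _ = X * _]/pair mulr_suml; apply: eq_bigr => a _.
rewrite pair_sum mulr_suml; apply: eq_bigr => b _.
rewrite pairZ -scalerAl; congr (_ *: _).
have -> : phiN N (hbas a) (hbas b) =
  \sum_k \sum_l N k l *: tens (hbas a * hbas k) (hbas b * hbas l) by [].
rewrite pair_sum [X in _ = _ * X]/pair mulr_sumr; apply: eq_bigr => k _.
rewrite pair_sum mulr_sumr; apply: eq_bigr => l _.
rewrite pairZ pair_tens; [|exact: PhiT_l|exact: PhiT_r].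
rewrite -scalerAr; congr (_ *: _); rewrite /PhiT.
change (Tm (hbas a * hbas k : Hc) * (hbas b * hbas l : Hc)
        = (Tm (hbas a) * hbas b) * (Tm (hbas k) * hbas l) :> Hc).
rewrite TM -!mulrA; congr (_ * _); rewrite mulrCA; done.
Qed.

Lemma T_counit z : pair PhiT (comul D z) = counit D z *: 1.
Proof.
apply: (pgen (P := fun z => pair PhiT (comul D z) = counit D z *: 1)).
- move=> x px; rewrite px pairD !pair_tens; try (exact: PhiT_l || exact: PhiT_r).
  rewrite /PhiT (T_prim px) T1 mulr1 mul1r addNr counit_prim // scale0r //.
- rewrite comul1 pair_tens; try (exact: PhiT_l || exact: PhiT_r).
  by rewrite /PhiT T1 mulr1 counit1 scale1r.
- by move=> x y hx hy; rewrite comulD pairD hx hy counitD scalerDl.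
- by move=> a x hx; rewrite comulZ pairZ hx counitZ scalerA.
- move=> x y hx hy; rewrite comulM pair_tmulT hx hy counitM.
  by rewrite -scalerAl mul1r scalerA.
Qed.

Lemma anti_T x : antipode D x = Tm x.
Proof.
symmetry; apply: T_eq_S; first exact: Tlin.
exact: T_counit.
Qed.

Lemma Rsg m : R (sg m).
Proof.
rewrite /sg; elim: (mdeg m) => [|k ih]; first by rewrite expr0; exact: R1.
by rewrite exprS; apply: RM => //; exact: RN1.
Qed.

Lemma G0_anti x : G0 x -> G0 (antipode D x).
Proof.
move=> hx; rewrite anti_T /Tm; apply: G0_sum => e _.
apply: G0_scale; first by apply: co_R; apply: G0_span.
apply: G0_scale; [exact: Rsg | exact: G0_mono].
Qed.
Lemma co0 e : co 0 e = 0.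
Proof.
have := co_sum (fun _ => 0) e; rewrite big1 // => e' _; by rewrite scale0r.
Qed.
Lemma coD (x y : Hc) e : co (x + y) e = co x e + co y e.
Proof. by have := co_lin 1 x y e; rewrite scale1r mul1r. Qed.
Lemma coZ (a : K) (x : Hc) e : co (a *: x) e = a * co x e.
Proof. by have := co_lin a x 0 e; rewrite addr0 co0 addr0. Qed.
Lemma co_sumZ (I : Type) (r : seq I) (P : pred I) (a : I -> K) (F : I -> Hc) e :
  co (\sum_(i <- r | P i) a i *: F i) e = \sum_(i <- r | P i) a i * co (F i) e.
Proof.
rewrite (big_morph (fun x => co x e) (fun x y => coD x y e) (co0 e)).
by apply: eq_bigr => i _; rewrite coZ.
Qed.

Lemma p1 : (1 < p)%N. Proof. exact: p_gt1. Qed.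
Definition ej (j : 'I_n) : Ex :=
  [ffun k => if k == j then Ordinal p1 else Ordinal p_gt0].

Lemma me_ej j : me (ej j) = U_(j)%MM.
Proof. by apply/mnmP => k; rewrite mnmE mnm1E ffunE eq_sym; case: (j == k). Qed.

Lemma s_monoE j : s j = monoE (ej j).
Proof. by rewrite /monoE me_ej monoU. Qed.

Lemma ej_inj j k : (ej j == ej k) = (j == k).
Proof.
apply/eqP/eqP => [h|->] //.
have := congr1 (fun f : Ex => (f j : nat)) h; rewrite /= !ffunE eqxx.
by case: (eqVneq j k) => // _ /=.
Qed.

Lemma coefR (M : 'I_n -> K) : G0 (\sum_j M j *: s j) -> forall j, R (M j).
Proof.
move=> h j; have := co_R (ej j) (G0_span h).
rewrite co_sumZ (bigD1 j) //= s_monoE co_monoE eqxx mulr1 big1 ?addr0 //.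
by move=> k /negbTE nk; rewrite s_monoE co_monoE ej_inj eq_sym nk mulr0.
Qed.

Lemma part1 :
  [/\ (forall i, theta_emb t Th i ^+ p = \sum_j A j i *: theta_emb t Th j),
      (forall q : {mpoly K[n]}, R_poly R q -> eval_at (theta_emb t Th) q = 0 ->
         exists g : 'I_n -> {mpoly K[n]},
           (forall i, R_poly R (g i)) /\ q = \sum_i g i * rel_poly p A i),
      (forall i, primitive D (theta_emb t Th i))
    & hopf_order R D (Rgen R (theta_emb t Th))].
Proof.
split.
- move=> i; exact: srelA.
- exact: inj_part.
- move=> i; exact: s_prim.
split; first by split; [exact: G0_0 | exact: G0_add | move=> r x; exact: G0_scale].
split.
  exists #|Ex|, (fun i => monoE (enum_val i) : H), (fun x => \row_i co x (enum_val i)).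
  split.
  - move=> i; exact: G0_mono.
  - by move=> x hx i; rewrite mxE; apply: co_R; apply: G0_span.
  - by move=> x y _ _; apply/matrixP => a b; rewrite !mxE coD.
  - by move=> r x _ _; apply/matrixP => a b; rewrite !mxE coZ.
  - move=> x _; rewrite {1}(co_spec x) sum_reindex; apply: eq_bigr => i _.
    by rewrite mxE.
split.
  move=> x; exists #|Ex|, (fun i => co x (enum_val i)), (fun i => monoE (enum_val i)).
  split; first by move=> i; exact: G0_mono.
  by rewrite {1}(co_spec x) sum_reindex.
split; first exact: G0_1.
split; first exact: G0_mul.
split; first exact: G0_comul.
split; first exact: G0_counit.
exact: G0_anti.
Qed.

End Emb.
Lemma sc_mul (T1 M : 'M[K]_n) i : sc (T1 *m M) i = \sum_j M j i *: sc T1 j.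
Proof.
rewrite /sc sum_coef2; apply: eq_bigr => k _; congr (_ *: _).
by rewrite mxE; apply: eq_bigr => j _; rewrite mulrC.
Qed.

Lemma G0_sub (T1 T2 M : 'M[K]_n) : (forall i j, R (M i j)) -> T2 = T1 *m M ->
  forall x, G0 T2 x -> G0 T1 x.
Proof.
move=> hM e x hx; apply: hx.
- move=> i; change (G0 T1 (sc T2 i)); rewrite e sc_mul.
  apply: G0_sum => j _; apply: G0_scale => //; exact: G0_s.
- exact: G0_1.
- move=> y z; exact: G0_add.
- move=> r y; exact: G0_scale.
- move=> y z; exact: G0_mul.
Qed.

Lemma part2 (A1 T1 A2 T2 : 'M[K]_n) :
  (forall i j, R (A1 i j)) -> T1 \in unitmx -> T1 *m A1 = B *m frob_mx p T1 ->
  (forall i j, R (A2 i j)) -> T2 \in unitmx -> T2 *m A2 = B *m frob_mx p T2 ->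
  ((forall x, Rgen R (theta_emb t T1) x <-> Rgen R (theta_emb t T2) x)
     <-> in_GLR R (invmx T1 *m T2)).
Proof.
move=> hA1 hT1 e1 hA2 hT2 e2.
set Mx := invmx T1 *m T2.
have eT2 : T2 = T1 *m Mx by rewrite /Mx mulmxA mulmxV // mul1mx.
have uM : Mx \in unitmx by rewrite /Mx unitmx_mul unitmx_inv hT1 hT2.
have eiM : invmx Mx = invmx T2 *m T1.
  have h : Mx *m (invmx T2 *m T1) = 1%:M.
    by rewrite /Mx -mulmxA (mulmxA T2) mulmxV // mul1mx mulVmx.
  by rewrite -[RHS](mulKmx uM) h mulmx1.
have eT1 : T1 = T2 *m invmx Mx by rewrite eiM mulmxA mulmxV // mul1mx.
split.
- move=> h; split => //.
  + move=> j i; apply: (coefR hA1 hT1 e1 (M := fun j => Mx j i)).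
    have es : s T2 i = \sum_j Mx j i *: s T1 j by rewrite /s {1}eT2 sc_mul.
    move: (G0_s (Th := T2) i); rewrite es => g; exact: (proj2 (h _) g).
  + move=> j i; apply: (coefR hA2 hT2 e2 (M := fun j => invmx Mx j i)).
    have es : s T1 i = \sum_j invmx Mx j i *: s T2 j by rewrite /s {1}eT1 sc_mul.
    move: (G0_s (Th := T1) i); rewrite es => g; exact: (proj1 (h _) g).
- move=> [_ hM hiM] x; split.
  + exact: (G0_sub hiM eT1).
  + exact: (G0_sub hM eT2).
Qed.

Lemma main_sec :
  (forall (A Th : 'M[K]_n),
     (forall i j, R (A i j)) -> Th \in unitmx ->
     Th *m A = B *m frob_mx p Th ->
     [/\ (forall i, theta_emb t Th i ^+ p = \sum_j A j i *: theta_emb t Th j),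
         (forall q : {mpoly K[n]}, R_poly R q -> eval_at (theta_emb t Th) q = 0 ->
            exists g : 'I_n -> {mpoly K[n]},
              (forall i, R_poly R (g i)) /\ q = \sum_i g i * rel_poly p A i),
         (forall i, primitive D (theta_emb t Th i))
       & hopf_order R D (Rgen R (theta_emb t Th))]) /\
  (forall (A Th A' Th' : 'M[K]_n),
     (forall i j, R (A i j)) -> Th \in unitmx -> Th *m A = B *m frob_mx p Th ->
     (forall i j, R (A' i j)) -> Th' \in unitmx -> Th' *m A' = B *m frob_mx p Th' ->
     ((forall x, Rgen R (theta_emb t Th) x <-> Rgen R (theta_emb t Th') x)
        <-> in_GLR R (invmx Th *m Th'))).
Proof.
split.
- move=> A Th hA hT e; exact: (part1 hA hT e).
- move=> A Th A' Th' hA hT e hA' hT' e'; exact: (part2 hA hT e hA' hT' e').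
Qed.

End Main.

Unset Implicit Arguments.
Theorem theorem4p2 (p : nat) (K : fieldType) (R : K -> Prop) (n : nat)
    (H : falgType K) (D : hopf_data H) (t : 'I_n -> H) (B : 'M[K]_n) :
  prime p -> p \in [pchar K] -> is_dvr R ->
  is_cc_hopf D -> \dim {:H} = (p ^ n)%N -> prim_generated D ->
  prim_basis D t ->
  (forall i, t i ^+ p = \sum_j B j i *: t j) ->
  (forall i j, R (B i j)) ->
  (forall (A Th : 'M[K]_n),
     (forall i j, R (A i j)) -> Th \in unitmx ->
     Th *m A = B *m frob_mx p Th ->
     [/\ (* u_i |-> s_i respects the defining relations of H_0 ... *)
         (forall i, theta_emb t Th i ^+ p = \sum_j A j i *: theta_emb t Th j),
         (* ... and the induced map R[u]/(relations) -> H is injective *)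
         (forall q : {mpoly K[n]}, R_poly R q -> eval_at (theta_emb t Th) q = 0 ->
            exists g : 'I_n -> {mpoly K[n]},
              (forall i, R_poly R (g i)) /\ q = \sum_i g i * rel_poly p A i),
         (* it is a Hopf map: the images s_i of the primitive u_i are primitive *)
         (forall i, primitive D (theta_emb t Th i))
       & (* its image R[s_1..s_n] is an R-Hopf order in H *)
         hopf_order R D (Rgen R (theta_emb t Th))]) /\
  (forall (A Th A' Th' : 'M[K]_n),
     (forall i j, R (A i j)) -> Th \in unitmx -> Th *m A = B *m frob_mx p Th ->
     (forall i j, R (A' i j)) -> Th' \in unitmx -> Th' *m A' = B *m frob_mx p Th' ->
     ((forall x, Rgen R (theta_emb t Th) x <-> Rgen R (theta_emb t Th') x)
        <-> in_GLR R (invmx Th *m Th'))).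
Proof.
move=> pp chp dvr hopf dimH pgen pbas tpow BR.
exact: (main_sec pp chp dvr hopf dimH pgen pbas tpow).
Qed.
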